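(* Let $\sigma$ be the $8$-uniform morphism on $\{0,1,2\}$ given by $\sigma(0)=00000122$, $\sigma(1)=10120011$, $\sigma(2)=12120021$, and $\varphi:\{0,1,2\}\to\mathbb{F}_2$ the coding $\varphi(0)=1$, $\varphi(1)=0$, $\varphi(2)=1$. Let $\mathbf a=(a_i)_{i\ge0}=\varphi(\sigma^\infty(0))$ and $f_{\mathbf a}(T)=\sum_{i\ge0}a_iT^{-i}\in\mathbb{F}_2[[T^{-1}]]$. Then $\mu(f_{\mathbf a})=5$.
   Context: $\sigma^\infty(0)=\lim_n\sigma^n(0)$ is the fixed point of $\sigma$ beginning with $0$; the coding is applied letterwise. Fix a real $|T|>1$; $|g|=|T|^{-i_0}$ for $g\in\mathbb{F}_2((T^{-1}))$ with leading term $T^{-i_0}$. The irrationality exponent $\mu(f)$ is the supremum of real $\tau$ such that $|f-P/Q|<|Q|^{-\tau}$ has infinitely many solutions $(P,Q)\in\mathbb{F}_2[T]^2$, $Q\ne0$. *)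

(* Defs.v *)
From HB Require Import structures.
From mathcomp Require Import all_boot all_order all_algebra.
From mathcomp Require Import boolp classical_sets cardinality reals ereal exp.
Set Implicit Arguments. Unset Strict Implicit. Unset Printing Implicit Defensive.
Import Order.TTheory GRing.Theory Num.Theory.
Local Open Scope ring_scope.

Definition sigma (x : nat) : seq nat :=
  match x with
  | 0 => [:: 0; 0; 0; 0; 0; 1; 2; 2]%N
  | 1 => [:: 1; 0; 1; 2; 0; 0; 1; 1]%N
  | 2 => [:: 1; 2; 1; 2; 0; 0; 2; 1]%N
  | _ => [::]
  end.

Definition sigma_word (w : seq nat) : seq nat := flatten (map sigma w).

Definition sigma_iter (n : nat) : seq nat := iter n sigma_word [:: 0%N].

(* sigma^oo(0) = lim_n sigma^n(0).  Since sigma(0) begins with 0, sigma^n(0)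
   is a prefix of sigma^(n+1)(0); sigma^(i+1)(0) has length 8^(i+1) > i, so
   its i-th letter is the i-th letter of the limit. *)
Definition sigma_fix (i : nat) : nat := nth 0%N (sigma_iter i.+1) i.

Definition phi (x : nat) : 'F_2 :=
  match x with
  | 0 => 1
  | 1 => 0
  | _ => 1
  end.

Definition a_seq (i : nat) : 'F_2 := phi (sigma_fix i).

(* A Laurent series g = sum_i g_i T^{-i} is represented by its coefficient
   function  g : int -> 'F_2  (g i = coefficient of T^{-i}), subject to
   only finitely many positive powers of T, i.e. g i = 0 for i small. *)
Definition laurent (g : int -> 'F_2) : Prop :=
  exists N : int, forall i : int, i < N -> g i = 0.

Definition poly_laurent (P : {poly 'F_2}) (i : int) : 'F_2 :=
  if i <= 0 then P`_(`|i|%N) else 0.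

Definition f_a (i : int) : 'F_2 :=
  if 0 <= i then a_seq `|i|%N else 0.

Definition poly_mul_laurent (Q : {poly 'F_2}) (g : int -> 'F_2) (i : int)
  : 'F_2 := \sum_(k < size Q) Q`_k * g (i + k%:Z).

Definition lead_index (g : int -> 'F_2) : int :=
  xget 0 [set i : int | g i != 0 /\ forall j : int, j < i -> g j = 0].

(* |g| = b^{-i0} (b = |T| > 1), and |0| = 0 *)
Definition labs {R : realType} (b : R) (g : int -> 'F_2) : R :=
  if `[< exists i : int, g i != 0 >] then b ^ (- lead_index g) else 0.

(* (P,Q) is a solution of |f - P/Q| < |Q|^{-tau}, Q <> 0.  P/Q is the
   (unique) Laurent series g with Q g = P. *)
Definition approx_sol {R : realType} (b : R) (f : int -> 'F_2) (tau : R)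
  (PQ : {poly 'F_2} * {poly 'F_2}) : Prop :=
  PQ.2 != 0 /\
  exists g : int -> 'F_2,
    [/\ laurent g,
        poly_mul_laurent PQ.2 g = poly_laurent PQ.1 &
        labs b (fun i => f i - g i) < powR (labs b (poly_laurent PQ.2)) (- tau)].

Definition irr_exponent {R : realType} (b : R) (f : int -> 'F_2) : \bar R :=
  ereal_sup [set (tau%:E)%E | tau in
             [set tau : R | ~ finite_set (approx_sol b f tau)]].

(* Main.v *)
Require Import Defs.
From mathcomp Require Import all_boot all_order all_algebra.
From mathcomp Require Import boolp classical_sets cardinality reals ereal exp.
From mathcomp Require Import zify ring lra.
Import Order.TTheory GRing.Theory Num.Theory.

Lemma size_sigma x : x < 3 -> size (sigma x) = 8.
Proof. by case: x => [|[|[|]]]. Qed.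

Lemma all_sigma x : all (fun y => y < 3) (sigma x).
Proof. by case: x => [|[|[|]]]. Qed.

Lemma all_sigma_word w : all (fun y => y < 3) (sigma_word w).
Proof.
elim: w => [|x w IH] //=; rewrite /sigma_word /= all_cat all_sigma; exact: IH.
Qed.

Lemma size_sigma_word w : all (fun y => y < 3) w -> size (sigma_word w) = 8 * size w.
Proof.
elim: w => [|x w IH] //= /andP[hx hw].
rewrite /sigma_word /= size_cat size_sigma // -/(sigma_word w) IH //; lia.
Qed.

Lemma nth_sigma_word w i j : all (fun y => y < 3) w -> i < size w -> j < 8 ->
  nth 0 (sigma_word w) (8 * i + j) = nth 0 (sigma (nth 0 w i)) j.
Proof.
elim: w i => [|x w IH] i //= /andP[hx hw] hi hj.
rewrite /sigma_word /= -/(sigma_word w) nth_cat size_sigma //.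
case: i hi => [|i] hi.
  by rewrite muln0 add0n hj.
rewrite ifF; last by apply/negbTE; rewrite -leqNgt; lia.
have -> : 8 * i.+1 + j - 8 = 8 * i + j by lia.
by apply: IH.
Qed.

Lemma all_iter n : all (fun y => y < 3) (sigma_iter n).
Proof. by case: n => [|n] //=; apply: all_sigma_word. Qed.

Lemma size_iter n : size (sigma_iter n) = 8 ^ n.
Proof.
elim: n => [|n IH] //=.
rewrite size_sigma_word; last exact: all_iter.
by rewrite IH expnS.
Qed.

Lemma iter_prefix n i : i < 8 ^ n -> nth 0 (sigma_iter n.+1) i = nth 0 (sigma_iter n) i.
Proof.
elim: n i => [|n IH] i hi.
  by rewrite expn0 ltnS leqn0 in hi; move/eqP: hi => ->.
rewrite (divn_eq i 8) mulnC.
have hq : i %/ 8 < 8 ^ n by rewrite ltn_divLR // -expnSr.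
have h8 : i %% 8 < 8 by rewrite ltn_mod.
change (sigma_iter n.+2) with (sigma_word (sigma_iter n.+1)).
change (sigma_iter n.+1) with (sigma_word (sigma_iter n)) at 2.
rewrite !nth_sigma_word ?all_iter ?size_iter //; last first.
  by apply: (leq_trans hq); rewrite leq_exp2l.
by rewrite IH.
Qed.

Lemma iter_prefix_le n m i : n <= m -> i < 8 ^ n ->
  nth 0 (sigma_iter m) i = nth 0 (sigma_iter n) i.
Proof.
move=> hnm hi; elim: m hnm => [|m IH] hnm.
  by rewrite leqn0 in hnm; move/eqP: hnm => ->.
rewrite leq_eqVlt in hnm; case/orP: hnm => [/eqP -> //|hnm].
rewrite iter_prefix; first exact: IH.
by apply: (leq_trans hi); rewrite leq_exp2l.
Qed.

Lemma fixE n i : i < 8 ^ n -> sigma_fix i = nth 0 (sigma_iter n) i.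
Proof.
move=> hi; rewrite /sigma_fix.
have hi' : i < 8 ^ i.+1 by apply: (ltn_trans (ltn_expl i (isT : 1 < 8))); rewrite ltn_exp2l.
rewrite -(@iter_prefix_le i.+1 (maxn n i.+1) i) ?leq_maxr //.
by rewrite (@iter_prefix_le n (maxn n i.+1) i) ?leq_maxl.
Qed.

Lemma fix_lt3 i : sigma_fix i < 3.
Proof.
have hi' : i < 8 ^ i.+1 by apply: (ltn_trans (ltn_expl i (isT : 1 < 8))); rewrite ltn_exp2l.
rewrite /sigma_fix; apply: (allP (all_iter i.+1)); apply: mem_nth.
by rewrite size_iter.
Qed.

Lemma fix_rec q r : r < 8 -> sigma_fix (8 * q + r) = nth 0 (sigma (sigma_fix q)) r.
Proof.
move=> hr.
have hq : q < 8 ^ q.+1 by apply: (ltn_trans (ltn_expl q (isT : 1 < 8))); rewrite ltn_exp2l.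
rewrite (@fixE q.+2); last by rewrite expnS; lia.
change (sigma_iter q.+2) with (sigma_word (sigma_iter q.+1)).
rewrite nth_sigma_word ?all_iter ?size_iter //.
Qed.

Lemma fix0 : sigma_fix 0 = 0.
Proof. by []. Qed.

Local Open Scope ring_scope.
Lemma F2xx (x : 'F_2) : x + x = 0.
Proof. by rewrite -mulr2n -mulr_natr pchar_Fp_0 // mulr0. Qed.
Lemma F2ne0 (x : 'F_2) : x != 0 -> x = 1.
Proof. by case: x => -[|[|]] //= i _; apply/val_inj. Qed.
Lemma F2opp (x : 'F_2) : - x = x.
Proof. by apply/eqP; rewrite eq_sym -subr_eq0 opprK F2xx. Qed.
Local Close Scope ring_scope.
Lemma u1 : sigma_fix 1 = 0. Proof. by rewrite (@fixE 1). Qed.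
Lemma u2 : sigma_fix 2 = 0. Proof. by rewrite (@fixE 1). Qed.
Lemma u3 : sigma_fix 3 = 0. Proof. by rewrite (@fixE 1). Qed.
Lemma u4 : sigma_fix 4 = 0. Proof. by rewrite (@fixE 1). Qed.
Lemma u5 : sigma_fix 5 = 1. Proof. by rewrite (@fixE 1). Qed.

Lemma u_pow k c : sigma_fix c <= 1 -> sigma_fix (8 ^ k * c) = sigma_fix c.
Proof.
move=> hc; elim: k => [|k IH]; first by rewrite mul1n.
by rewrite expnS -mulnA -[8 * _]addn0 fix_rec // IH; case: (sigma_fix c) hc => [|[|]].
Qed.

Lemma uN k : sigma_fix (8 ^ k) = 0.
Proof. by rewrite -[8 ^ k]muln1 u_pow u1. Qed.
Lemma u4N k : sigma_fix (4 * 8 ^ k) = 0.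
Proof. by rewrite mulnC u_pow u4. Qed.
Lemma u5N k : sigma_fix (5 * 8 ^ k) = 1.
Proof. by rewrite mulnC u_pow u5. Qed.

Lemma u_per k m : 1 <= m -> m < 4 * 8 ^ k -> sigma_fix m = sigma_fix (m + 8 ^ k).
Proof.
elim: k m => [|k IH] m h1 h2.
  rewrite expn0 muln1 in h2.
  case: m h1 h2 => [|[|[|[|]]]] //= _ _; by rewrite ?u1 ?u2 ?u3 ?u4.
rewrite (divn_eq m 8) mulnC.
have hr : m %% 8 < 8 by rewrite ltn_mod.
have -> : 8 * (m %/ 8) + m %% 8 + 8 ^ k.+1 = 8 * (m %/ 8 + 8 ^ k) + m %% 8.
  rewrite expnS; lia.
rewrite !fix_rec //.
case hq : (m %/ 8) => [|q].
  by rewrite add0n uN fix0.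
rewrite -IH //.
rewrite -hq ltn_divLR // ; move: h2; rewrite expnS; lia.
Qed.

Lemma u_permod k n : 1 <= n -> n < 5 * 8 ^ k ->
  sigma_fix n = sigma_fix ((n - 1) %% 8 ^ k + 1).
Proof.
set N := 8 ^ k.
have hN : 0 < N by rewrite expn_gt0.
elim: n {-2}n (leqnn n) => [|M IH] n hn h1 h2; first by lia.
case: (leqP n N) => hnN.
  rewrite modn_small; last by lia.
  by rewrite subnK.
have -> : n = (n - N) + N by lia.
rewrite -u_per; last by rewrite /N in h2 *; lia.
  2: by lia.
have -> : (n - N + N - 1) %% N = (n - N - 1) %% N.
  have -> : n - N + N - 1 = (n - N - 1) + N by lia.
  by rewrite modnDr.
apply: IH; lia.
Qed.

Lemma u5N_mod k : (5 * 8 ^ k - 1) %% 8 ^ k + 1 = 8 ^ k.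
Proof.
have hN : 0 < 8 ^ k by rewrite expn_gt0.
have -> : 5 * 8 ^ k - 1 = (8 ^ k - 1) + 4 * 8 ^ k by lia.
rewrite [_ + 4 * _]addnC modnMDl modn_small; lia.
Qed.

Lemma sum_phi8 c : c < 3 ->
  (\sum_(j < 8) phi (nth 0 (sigma c) j))%R = phi c.
Proof.
case: c => [|[|[|]]] // _; rewrite !big_ord_recr big_ord0 /=.
all: by apply/eqP; vm_compute.
Qed.

Lemma sum_a8 n : (\sum_(i < (8 * n)%N) a_seq i)%R = (\sum_(i < n) a_seq i)%R.
Proof.
elim: n => [|n IH]; first by rewrite !big_ord0.
rewrite -!(big_mkord xpredT) in IH *.
rewrite [in RHS]big_nat_recr // -IH.
have -> : 8 * n.+1 = 8 * n + 8 by lia.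
rewrite (@big_cat_nat _ _ _ (8 * n) 0 (8 * n + 8)); [|lia|lia].
congr (_ + _)%R.
rewrite -{1}[8 * n]add0n big_addn.
have -> : 8 * n + 8 - 8 * n = 8 by lia.
rewrite big_mkord /a_seq -(@sum_phi8 _ (fix_lt3 n)).
apply: eq_bigr => j _.
by rewrite addnC fix_rec.
Qed.

Lemma sum_aN k : (\sum_(i < 8 ^ k) a_seq i)%R = 1%R.
Proof.
elim: k => [|k IH]; first by rewrite expn0 big_ord1.
by rewrite expnS sum_a8.
Qed.

Local Open Scope ring_scope.
Notation L := poly_mul_laurent.

Lemma LE (Q : {poly 'F_2}) g i n : (size Q <= n)%N ->
  L Q g i = \sum_(k < n) Q`_k * g (i + k%:Z).
Proof.
move=> hn; rewrite /poly_mul_laurent.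
rewrite -!(big_mkord xpredT (fun k => Q`_k * g (i + k%:Z))).
rewrite (@big_cat_nat _ _ _ (size Q) 0 n) //=.
rewrite [X in _ + X]big_nat_cond [X in _ + X]big1 ?addr0 // => k /andP[/andP[hk _] _].
by rewrite nth_default // mul0r.
Qed.

Lemma L0 g i : L 0 g i = 0.
Proof. by rewrite /poly_mul_laurent size_poly0 big_ord0. Qed.

Lemma LD p q g i : L (p + q) g i = L p g i + L q g i.
Proof.
set n := maxn (size p) (size q).
rewrite !(@LE _ _ _ n) ?leq_maxl ?leq_maxr ?size_polyD //.
by rewrite -big_split; apply: eq_bigr => k _; rewrite coefD mulrDl.
Qed.

Lemma LZ c p g i : L (c *: p) g i = c * L p g i.
Proof.
rewrite !(@LE _ _ _ (size p)) ?size_scale_leq // mulr_sumr.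
by apply: eq_bigr => k _; rewrite coefZ mulrA.
Qed.

Lemma LX p g i : L (p * 'X) g i = L p g (i + 1).
Proof.
have hs : (size (p * 'X)%R <= (size p).+1)%N.
  apply: (leq_trans (size_mul_leq _ _)); rewrite size_polyX; lia.
rewrite (LE _ _ _ _ hs) (@LE p _ _ (size p)) // big_ord_recl coefMX eqxx mul0r add0r.
apply: eq_bigr => k _; rewrite coefMX /= /bump /=.
congr (_ * g _); rewrite -addrA; congr (_ + _).
Qed.

Lemma LC c g i : L c%:P g i = c * g i.
Proof.
rewrite (@LE _ _ _ 1) ?size_polyC ?leq_b1 // big_ord1 coefC /=.
by rewrite addr0.
Qed.

Lemma Lshift p g i : L p (fun j => g (j + 1)) i = L p g (i + 1).
Proof. by apply: eq_bigr => k _; rewrite addrAC. Qed.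

Lemma LgB p g1 g2 i : L p (fun j => g1 j - g2 j) i = L p g1 i - L p g2 i.
Proof. by rewrite /poly_mul_laurent -sumrB; apply: eq_bigr => k _; rewrite mulrBr. Qed.

Lemma Lassoc p q g : L (p * q) g = L p (L q g).
Proof.
elim/poly_ind: p q g => [|p c IH] q g; apply/funext => i.
  by rewrite mul0r !L0.
rewrite mulrDl LD -mulrA (mulrC 'X) IH mul_polyC LZ LD LC LX.
congr (_ + _).
rewrite -Lshift; congr (L p _ i); apply/funext => j.
by rewrite LX.
Qed.

Definition dlt (i : int) : 'F_2 := if i == 0 then 1 else 0.

Lemma LP P : L P dlt = poly_laurent P.
Proof.
apply/funext => i; rewrite /poly_laurent.
case: ifP => hi; last first.
  apply: big1 => k _; rewrite /dlt ifF ?mulr0 //.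
  apply/negbTE; move/negbT: hi; rewrite -ltNge => hi.
  by rewrite gt_eqF // ltr_wpDr.
set n := `|i|%N.
have hin : i = - n%:Z by rewrite /n lez0_abs // opprK.
rewrite (@LE _ _ _ (maxn (size P) n.+1)) ?leq_maxl //.
transitivity (\sum_(k < maxn (size P) n.+1 | k == n :> nat) P`_k).
  rewrite [RHS]big_mkcond /=; apply: eq_bigr => k _.
  rewrite /dlt hin.
  case: (eqVneq (k : nat) n) => [hk|hne].
    by rewrite hk addrC subrr eqxx mulr1.
  rewrite ifF ?mulr0 //; apply/negbTE.
  rewrite addrC subr_eq0 eqz_nat; exact: hne.
by rewrite big_ord1_eq ifT // leq_max ltnSn orbT.
Qed.

Lemma Lpoly Q P : L Q (poly_laurent P) = poly_laurent (Q * P).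
Proof. by rewrite -!LP Lassoc. Qed.

Lemma Lcomm Q R g : L Q (L R g) = L R (L Q g).
Proof. by rewrite -!Lassoc mulrC. Qed.

Lemma pl_pos P i : 0 < i -> poly_laurent P i = 0.
Proof. by move=> hi; rewrite /poly_laurent ifF // leNgt hi. Qed.

Lemma pl_inj P P' : poly_laurent P = poly_laurent P' -> P = P'.
Proof.
move=> E; apply/polyP => n.
have := congr1 (fun h => h (- n%:Z)) E.
by rewrite /poly_laurent oppr_le0 abszN absz_nat le0z_nat.
Qed.

Definition isval (g : int -> 'F_2) v := g v != 0 /\ forall j, j < v -> g j = 0.

Lemma val_exists g : laurent g -> (exists i, g i != 0) -> exists v, isval g v.
Proof.
move=> [N0 hN0] [i0 hi0].
have ex : exists n : nat, g (N0 + n%:Z) != 0.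
  exists `|i0 - N0|%N.
  have hle : N0 <= i0 by rewrite leNgt; apply/negP => /hN0; apply/eqP.
  by rewrite gez0_abs ?subr_ge0 // subrKC.
case: (ex_minnP ex) => m hm hmin.
exists (N0 + m%:Z); split => // j hj.
case: (ltP j N0) => hjN; first exact: hN0.
have hj' : j = N0 + `|j - N0|%N by rewrite gez0_abs ?subr_ge0 // subrKC.
apply/eqP; apply: contraTT hj => hne; rewrite -leNgt hj' lerD2l lez_nat.
by apply: hmin; rewrite -hj'.
Qed.

Lemma isval_uniq g v w : isval g v -> isval g w -> v = w.
Proof.
move=> [hv hv'] [hw hw'].
case: (ltgtP v w) => // h.
  by move: hv; rewrite hw'.
by move: hw; rewrite hv'.
Qed.

Lemma lead_val g v : isval g v -> lead_index g = v.
Proof.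
move=> hv; rewrite /lead_index; apply: xget_unique; first exact: hv.
by move=> y hy; apply: (@isval_uniq g y v hy hv).
Qed.

Lemma labs_val {R : realType} (b : R) g v : isval g v -> labs b g = b ^ (- v).
Proof.
move=> hv.
have ex : exists i, g i != 0 by exists v; case: hv.
by rewrite /labs (asboolT ex) (lead_val _ _ hv).
Qed.

Lemma labs0 {R : realType} (b : R) g : (forall i, g i = 0) -> labs b g = 0.
Proof.
move=> h.
have nex : ~ (exists i, g i != 0) by case => i; rewrite h eqxx.
by rewrite /labs (asboolF nex).
Qed.

Lemma Lval Q g v : Q != 0 -> isval g v -> isval (L Q g) (v - ((size Q).-1)%:Z).
Proof.
move=> hQ [hv hv'].
have hs : size Q = (size Q).-1.+1 by rewrite prednK // size_poly_gt0.
set d := (size Q).-1 in hs *.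
split.
  rewrite (LE _ _ _ _ (leqnn _)) hs big_ord_recr /= big1 ?add0r.
    rewrite subrK mulf_neq0 //.
    by rewrite -lead_coefE /d lead_coef_eq0.
  move=> k _; rewrite hv' ?mulr0 //.
  have := ltn_ord k; lia.
move=> j hj; rewrite (LE _ _ _ _ (leqnn _)) hs; apply: big1 => k _.
rewrite hv' ?mulr0 //.
have hk : (k <= d)%N by exact: (ltn_ord k).
move: hj hk; lia.
Qed.

Lemma isval_dlt : isval dlt 0.
Proof.
split; first by rewrite /dlt eqxx.
by move=> j hj; rewrite /dlt ifF //; apply/negbTE; rewrite lt_eqF.
Qed.

Lemma isval_pl Q : Q != 0 -> isval (poly_laurent Q) (- ((size Q).-1)%:Z).
Proof. by move=> hQ; rewrite -LP -[X in isval _ X]add0r; apply: Lval => //; exact: isval_dlt. Qed.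

Definition NN k := (8 ^ k)%N.
Lemma NN_gt0 k : (0 < NN k)%N. Proof. by rewrite expn_gt0. Qed.

Definition qk k : {poly 'F_2} := 'X^(NN k) + 1%:P.
Definition gk k (i : int) : 'F_2 :=
  if i < 0 then 0 else if i == 0 then 1 else a_seq (((`|i| - 1) %% NN k) + 1)%N.
Definition pk k : {poly 'F_2} :=
  \poly_(j < (NN k).+1) (if j == 0%N then 0 else a_seq (NN k - j)).

Lemma LXn n g i : L 'X^n g i = g (i + n%:Z).
Proof.
elim: n i => [|n IH] i; first by rewrite expr0 -polyC1 LC mul1r addr0.
by rewrite exprSr LX IH -addrA; congr (g _); lia.
Qed.

Lemma L_qk k g i : L (qk k) g i = g i + g (i + (NN k)%:Z).
Proof. by rewrite LD LXn LC mul1r addrC. Qed.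

Lemma size_qk k : size (qk k) = (NN k).+1.
Proof. by rewrite size_XnaddC // NN_gt0. Qed.

Lemma qk_neq0 k : qk k != 0.
Proof. by rewrite -size_poly_eq0 size_qk. Qed.

Lemma a0 : a_seq 0 = 1. Proof. by []. Qed.
Lemma aN k : a_seq (NN k) = 1. Proof. by rewrite /a_seq uN. Qed.

Lemma gk_per k (n : nat) : (0 < n)%N -> gk k n = gk k (n + NN k)%N.
Proof.
move=> hn; rewrite /gk /=.
have h1 : (Posz n == 0) = false by rewrite eqz_nat; apply/negbTE/eqP; lia.
have h2 : (Posz (n + NN k)%N == 0) = false by rewrite eqz_nat; apply/negbTE/eqP; lia.
rewrite h1 h2.
have -> : (n + NN k - 1 = (n - 1) + NN k)%N by lia.
by rewrite modnDr.
Qed.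

Lemma gk_small k (n : nat) : (n <= NN k)%N -> gk k n = a_seq n.
Proof.
move=> hn; rewrite /gk /=.
case: n hn => [|n] hn //=.
rewrite modn_small; last by lia.
by rewrite subn1 /= addn1.
Qed.

Lemma gk_neg k i : i < 0 -> gk k i = 0.
Proof. by move=> hi; rewrite /gk hi. Qed.

Lemma pk_spec k : L (qk k) (gk k) = poly_laurent (pk k).
Proof.
apply/funext => i; rewrite L_qk.
case: i => [n|n].
  case: n => [|n].
    rewrite /poly_laurent /= coef_poly /= add0r !gk_small //.
    by rewrite a0 aN F2xx.
  rewrite pl_pos // -PoszD (gk_per k n.+1) //.
  by rewrite F2xx.
rewrite gk_neg // add0r /poly_laurent /= coef_poly.
case: (ltnP n (NN k)) => hn.
  have -> : Negz n + Posz (NN k) = Posz (NN k - n.+1) by rewrite NegzE; lia.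
  rewrite ltnS hn gk_small; last by lia.
  by [].
rewrite gk_neg; last by rewrite NegzE; lia.
by rewrite ifF //; apply/negbTE; rewrite -leqNgt.
Qed.

Lemma fmg_val k : isval (fun i => f_a i - gk k i) (5 * NN k)%N.
Proof.
have hN := NN_gt0 k.
split.
  rewrite /f_a /gk /=.
  have h1 : (Posz (5 * NN k)%N == 0) = false by rewrite eqz_nat; apply/negbTE/eqP; lia.
  rewrite h1 /NN u5N_mod /a_seq u5N uN.
  by apply/eqP; vm_compute.
move=> j hj; rewrite /f_a.
case: j hj => [n|n] hn; last first.
  by rewrite /= gk_neg // subr0.
rewrite /gk /=.
case: n hn => [|n] hn //=; first by rewrite subrr.
rewrite /a_seq -u_permod //; first by rewrite subrr.
Qed.

Lemma P2xx (p : {poly 'F_2}) : p + p = 0.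
Proof. by apply/polyP => i; rewrite coefD coef0 F2xx. Qed.

Lemma frob m : ('X + 1%:P : {poly 'F_2}) ^+ (2 ^ m) = 'X^(2 ^ m) + 1%:P.
Proof.
elim: m => [|m IH]; first by rewrite expn0 !expr1.
rewrite expnSr exprM IH sqrrD.
have -> : ('X^(2 ^ m) * 1%:P) *+ 2 = 0 :> {poly 'F_2}.
  by rewrite mulr2n P2xx.
by rewrite addr0 -exprM polyC1 expr1n.
Qed.

Lemma qk_pow k : qk k = ('X - 1%:P) ^+ NN k.
Proof.
have -> : ('X - 1%:P : {poly 'F_2}) = 'X + 1%:P by rewrite -polyCN F2opp.
by rewrite /qk /NN -(expnM 2 3 k) frob.
Qed.

Lemma pk_root k : ~~ root (pk k) 1.
Proof.
rewrite /root horner_poly big_ord_recl /= mul0r add0r.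
have -> : \sum_(i < NN k) (if bump 0 i == 0%N then 0 else a_seq (NN k - bump 0 i)) * 1 ^+ bump 0 i
   = \sum_(i < NN k) a_seq (NN k - i.+1).
  by apply: eq_bigr => i _; rewrite expr1n mulr1.
have -> : \sum_(i < NN k) a_seq (NN k - i.+1) = \sum_(i < NN k) a_seq i.
  by rewrite -(big_mkord xpredT a_seq) big_rev_mkord subn0.
by rewrite sum_aN oner_eq0.
Qed.

Lemma qk_dvd k Q P : Q * pk k = qk k * P -> qk k %| Q.
Proof.
move=> E.
have hc : coprimep (qk k) (pk k).
  rewrite coprimep_sym qk_pow; apply: coprimep_expr.
  by rewrite coprimep_XsubC pk_root.
by rewrite -(Gauss_dvdpl _ hc) E dvdp_mulIl.
Qed.

Lemma natzR {R : realType} (n : nat) : ((Posz n)%:~R : R) = n%:R.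
Proof. by []. Qed.

Lemma powR_lt {R : realType} (b : R) x y : 1 < b -> (b `^ x < b `^ y) = (x < y).
Proof.
move=> hb; apply/idP/idP => h.
  rewrite ltNge; apply/negP => hyx.
  by move: h; rewrite ltNge (ler_powR (ltW hb) hyx).
rewrite lt_neqAle (ler_powR (ltW hb) (ltW h)) andbT.
apply/negP => /eqP E.
have := congr1 (@ln R) E; rewrite !ln_powR => E2.
have hl : 0 < ln b by apply: ln_gt0.
by move: h; rewrite ltNge (mulIf (lt0r_neq0 hl) E2) lexx.
Qed.

Lemma labs_pl {R : realType} (b : R) Q : 1 < b -> Q != 0 ->
  labs b (poly_laurent Q) = b `^ ((size Q).-1)%:R.
Proof.
move=> hb hQ; rewrite (labs_val _ _ _ (isval_pl Q hQ)) opprK.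
by rewrite powR_mulrn // ltW // (lt_trans ltr01).
Qed.

Lemma labs_bound {R : realType} (b : R) (h : int -> 'F_2) y : 1 < b ->
  laurent h -> labs b h < b `^ (- y) -> forall i : int, i%:~R <= y -> h i = 0.
Proof.
move=> hb hl hlt i hi.
case: (pselect (exists j, h j != 0)) => [ex|nex]; last first.
  by apply/eqP; apply: contra_notT nex => hne; exists i.
have [v hv] := val_exists h hl ex.
move: hlt; rewrite (labs_val _ _ _ hv) -powR_intmul; last by rewrite ltW // (lt_trans ltr01).
rewrite powR_lt // intrN ltrN2 => hyv.
case: hv => _ hv; apply: hv.
by rewrite -(ltr_int R); apply: (le_lt_trans hi).
Qed.

Lemma laurentB (f g : int -> 'F_2) : laurent f -> laurent g -> laurent (fun i => f i - g i).
Proof.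
move=> [N1 h1] [N2 h2]; exists (Num.min N1 N2) => i hi.
rewrite h1 ?h2 ?subr0 //.
  by apply: (lt_le_trans hi); rewrite ge_min lexx orbT.
by apply: (lt_le_trans hi); rewrite ge_min lexx.
Qed.

Lemma laurent_fa : laurent f_a.
Proof. by exists 0 => i hi; rewrite /f_a leNgt hi. Qed.

Lemma laurent_gk k : laurent (gk k).
Proof. by exists 0 => i hi; apply: gk_neg. Qed.

Lemma pick_k d : (0 < d)%N -> exists k, (d < 4 * NN k)%N /\ (NN k <= 2 * d)%N.
Proof.
move=> hd.
have h1 := trunc_logP (isT : (1 < 8)%N) hd.
have h2 := trunc_log_ltn d (isT : (1 < 8)%N).
set t := trunc_log 8 d in h1 h2.
case: (ltnP d (4 * 8 ^ t)) => h3.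
  by exists t; split => //; rewrite /NN; lia.
exists t.+1; rewrite /NN expnS; rewrite expnS in h2; split; lia.
Qed.

Lemma sol_deg0 {R : realType} (b : R) (hb : 1 < b) (tau : R) (htau : 5 < tau) P Q :
  approx_sol b f_a tau (P, Q) -> (size Q).-1 = 0%N.
Proof.
move=> [/= hQ [g [hg hQg hlt]]].
set d := (size Q).-1 in hlt *.
apply/eqP; rewrite -leqn0 leqNgt; apply/negP => hd0.
rewrite labs_pl // -powRrM in hlt.
have hz : forall i : int, i%:~R <= d%:R * tau -> f_a i - g i = 0.
  move=> i hi.
  apply: (labs_bound b _ (d%:R * tau) hb (laurentB _ _ laurent_fa hg) _ i hi).
  by rewrite -mulrN.
have [k [hk4 hk2]] := pick_k d hd0.
have hNpos := NN_gt0 k.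
have hNR : 0 < (NN k)%:R :> R by rewrite ltr0n.
case: (pselect (forall i, g i = gk k i)) => [heq|hne].
  have hg' : g = gk k by apply/funext.
  rewrite hg' in hQg hz.
  have E : Q * pk k = qk k * P.
    by apply: pl_inj; rewrite -!Lpoly -pk_spec -hQg Lcomm.
  have hs := dvdp_leq hQ (qk_dvd k Q P E).
  rewrite size_qk in hs.
  have hNd : (NN k <= d)%N by rewrite /d -ltnS prednK ?size_poly_gt0.
  have hNdR : (NN k)%:R <= d%:R :> R by rewrite ler_nat.
  case: (fmg_val k) => hnz _.
  apply/negP: hnz; apply/negPn/eqP; apply: hz.
  rewrite natzR natrM; nra.
have exD : exists i, g i - gk k i != 0.
  case: (pselect (exists i, g i - gk k i != 0)) => // nex; exfalso.
  apply: hne => i; apply/eqP; rewrite -subr_eq0; apply/negPn/negP => h.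
  by apply: nex; exists i.
have [v hv] := val_exists _ (laurentB _ _ hg (laurent_gk k)) exD.
have hk2R : (NN k)%:R <= 2 * d%:R :> R by rewrite -natrM ler_nat.
have hvgt : ((NN k + d)%N : int) < v.
  rewrite ltNge; apply/negP => hle.
  case: hv => hv0 _; apply/negP: hv0; apply/negPn/eqP.
  have e1 : g v - gk k v = (f_a v - gk k v) - (f_a v - g v) by ring.
  rewrite e1 (hz v) ?subr0.
    case: (fmg_val k) => _ h5; apply: h5; lia.
  apply: (le_trans (y := ((NN k + d)%N : int)%:~R)); first by rewrite ler_int.
  rewrite natzR natrD; nra.
have hS := Lval (qk k) _ _ (qk_neq0 k) (Lval Q _ v hQ hv).
rewrite size_qk /= -/d in hS.
case: hS => hS _; apply/negP: hS; apply/negPn/eqP.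
have eLD : L Q (fun i => g i - gk k i) = fun i => poly_laurent P i - L Q (gk k) i.
  by apply/funext => i; rewrite LgB hQg.
rewrite eLD LgB (Lcomm (qk k) Q) pk_spec !Lpoly !pl_pos ?subr0 //; lia.
Qed.

Lemma sol_fin {R : realType} (b : R) (hb : 1 < b) (tau : R) (htau : 5 < tau) :
  (approx_sol b f_a tau `<=` [set (1%:P, 1%:P)])%classic.
Proof.
move=> [P Q] hsol.
have hd := sol_deg0 b hb tau htau P Q hsol.
case: hsol => /= [hQ [g [hg hQg hlt]]].
have hs1 : size Q = 1%N by rewrite -(prednK (_ : (0 < size Q)%N)) ?hd // size_poly_gt0.
have hQ1 : Q = 1%:P.
  rewrite (size1_polyC (eq_leq hs1)); congr (_%:P); apply: F2ne0.
  apply: contra hQ => /eqP h0; apply/eqP.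
  by rewrite (size1_polyC (eq_leq hs1)) h0.
rewrite hQ1 in hQg hlt.
have hgP : g = poly_laurent P.
  by rewrite -hQg; apply/funext => i; rewrite LC mul1r.
rewrite hgP labs_pl ?oner_neq0 // size_polyC oner_neq0 /= powRr0 powR1 in hlt.
have hz : forall i : int, (i%:~R : R) <= 0 -> f_a i - poly_laurent P i = 0.
  move=> i hi.
  have hlP : laurent (poly_laurent P) by rewrite -hgP.
  apply: (labs_bound b (fun i => f_a i - poly_laurent P i) 0 hb (laurentB _ _ laurent_fa hlP) _ i hi).
  by rewrite oppr0 powRr0.
rewrite hQ1 /=; congr (_, _).
apply/polyP => j.
have := hz (- j%:Z); rewrite lerz0 oppr_le0 le0z_nat => /(_ isT) /eqP.
rewrite subr_eq0 => /eqP.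
rewrite /poly_laurent oppr_le0 le0z_nat abszN absz_nat => <-.
rewrite /f_a coefC oppr_ge0.
case: j => [|j] //=.
Qed.

Lemma sol_lower {R : realType} (b : R) (hb : 1 < b) (tau : R) (htau : tau < 5) k :
  approx_sol b f_a tau (pk k, qk k).
Proof.
split => /=; first exact: qk_neq0.
exists (gk k); split; [exact: laurent_gk | exact: pk_spec |].
rewrite (labs_val _ _ _ (fmg_val k)) labs_pl ?qk_neq0 // size_qk /=.
rewrite -powRrM -powR_intmul; last by rewrite ltW // (lt_trans ltr01).
rewrite powR_lt // intrN natzR natrM.
have hNR : 1 <= (NN k)%:R :> R by rewrite ler1n NN_gt0.
nra.
Qed.

Lemma sol_inf {R : realType} (b : R) (hb : 1 < b) (tau : R) (htau : tau < 5) :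
  ~ finite_set (approx_sol b f_a tau).
Proof.
move=> hfin.
pose F := fun k => (pk k, qk k).
have hpre : finite_set (F @^-1` approx_sol b f_a tau)%classic.
  apply: finite_preimage => // k1 k2 _ _ [_ Eq].
  have := congr1 (fun p : {poly 'F_2} => size p) Eq; rewrite /= !size_qk => -[].
  by apply: expnI.
apply: infinite_nat; apply: sub_finite_set hpre => k _.
exact: sol_lower.
Qed.

Local Open Scope classical_set_scope.
Theorem proposition5p5 (R : realType) (b : R) (hb : 1 < b) :
  irr_exponent b f_a = (5%:R)%:E.
Proof.
rewrite /irr_exponent.
set T := [set tau : R | ~ finite_set (approx_sol b f_a tau)].
have hT1 : forall tau, T tau -> tau <= 5.
  move=> tau htau; rewrite leNgt; apply/negP => h; apply: htau.
  exact: (sub_finite_set (sol_fin b hb tau h) (finite_set1 _)).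
have hT2 : forall tau, tau < 5 -> T tau.
  by move=> tau h; apply: sol_inf.
apply/eqP; rewrite eq_le; apply/andP; split.
  apply: ge_ereal_sup => _ [tau htau <-]; rewrite lee_fin; exact: hT1.
case E: (ereal_sup _) => [s| |]; [| exact: leey |].
  rewrite lee_fin leNgt; apply/negP => hs.
  have : (((s + 5) / 2)%:E <= s%:E)%E.
    rewrite -E; apply: ereal_sup_ubound; exists ((s + 5) / 2) => //.
    apply: hT2; lra.
  rewrite lee_fin; lra.
have : ((4 : R)%:E <= -oo)%E.
  rewrite -E; apply: ereal_sup_ubound; exists 4 => //.
  apply: hT2; lra.
by [].
Qed.
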